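(* For every constant $\epsilon<1$ the following holds. There is no pair of maps $g_r,g_c$, where $g_r$ assigns to each row payoff matrix $R$ (entries in $[0,1]$) a mixed strategy over rows and $g_c$ assigns to each pair $(R,C)$ of payoff matrices a mixed strategy over columns, such that for every bimatrix game $(R,C)$ the profile $(g_r(R),g_c(R,C))$ is an $\epsilon$-well-supported Nash equilibrium. In other words, with unlimited one-way communication (from the row player to the column player) it is impossible to guarantee an $\epsilon$-well-supported Nash equilibrium for any constant $\epsilon<1$.
   Context: A bimatrix game $(R,C)$ has payoff matrices with entries in $[0,1]$; mixed strategies $\mathbf{x},\mathbf{y}$ are probability vectors over rows and columns. For a mixed strategy $\mathbf{y}$ of the column player, row $i$ is an $\epsilon$-best response if $\mathbf{e}_i^TR\mathbf{y}\ge\mathbf{e}_{i'}^TR\mathbf{y}-\epsilon$ for all rows $i'$; similarly for the column player with $C$. $(\mathbf{x},\mathbf{y})$ is an $\epsilon$-well-supported Nash equilibrium if every pure strategy in the support of $\mathbf{x}$ is an $\epsilon$-best response to $\mathbf{y}$ and every pure strategy in the support of $\mathbf{y}$ is an $\epsilon$-best response to $\mathbf{x}$. In one-way communication only the row player sends information, so his output depends only on $R$. *)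

(* Defs.v *)
From mathcomp Require Import all_boot all_order all_algebra.
From mathcomp Require Import reals.
Set Implicit Arguments. Unset Strict Implicit. Unset Printing Implicit Defensive.
Import Order.TTheory GRing.Theory Num.Theory.
Local Open Scope ring_scope.

Section Games.
Variable R : realType.

Definition payoff_matrix n m (A : 'M[R]_(n, m)) : Prop :=
  forall i j, 0 <= A i j /\ A i j <= 1.

Definition is_mixed n (x : 'I_n -> R) : Prop :=
  (forall i, 0 <= x i) /\ \sum_(i < n) x i = 1.

Definition row_payoff n m (A : 'M[R]_(n, m)) (y : 'I_m -> R) (i : 'I_n) : R :=
  \sum_(j < m) A i j * y j.

Definition col_payoff n m (B : 'M[R]_(n, m)) (x : 'I_n -> R) (j : 'I_m) : R :=
  \sum_(i < n) x i * B i j.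

Definition row_eps_best_response n m (A : 'M[R]_(n, m)) (y : 'I_m -> R)
  (eps : R) (i : 'I_n) : Prop :=
  forall i' : 'I_n, row_payoff A y i' - eps <= row_payoff A y i.

Definition col_eps_best_response n m (B : 'M[R]_(n, m)) (x : 'I_n -> R)
  (eps : R) (j : 'I_m) : Prop :=
  forall j' : 'I_m, col_payoff B x j' - eps <= col_payoff B x j.

Definition eps_WSNE n m (A B : 'M[R]_(n, m)) (x : 'I_n -> R) (y : 'I_m -> R)
  (eps : R) : Prop :=
  [/\ is_mixed x, is_mixed y,
      (forall i, 0 < x i -> row_eps_best_response A y eps i) &
      (forall j, 0 < y j -> col_eps_best_response B x eps j)].

End Games.

(* Main.v *)
Require Import Defs.
From mathcomp Require Import all_boot all_order all_algebra.
From mathcomp Require Import reals.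
Import Order.TTheory GRing.Theory Num.Theory.
Local Open Scope ring_scope.

Lemma sum2 (R : realType) (f : 'I_2 -> R) :
  \sum_(j < 2) f j = f ord0 + f (@Ordinal 2 1 isT).
Proof. rewrite big_ord_recl big_ord1; congr (_ + _); congr f; exact: val_inj. Qed.

Theorem theorem4 (R : realType) (eps : R) :
  eps < 1 ->
  ~ exists (g_r : forall n m : nat, 'M[R]_(n, m) -> 'I_n -> R)
           (g_c : forall n m : nat, 'M[R]_(n, m) -> 'M[R]_(n, m) -> 'I_m -> R),
      forall (n m : nat) (A B : 'M[R]_(n, m)),
        (0 < n)%N -> (0 < m)%N ->
        payoff_matrix A -> payoff_matrix B ->
        eps_WSNE A B (g_r n m A) (g_c n m A B) eps.
Proof.
move=> he [gr [gc H]].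
pose A : 'M[R]_(2,2) := \matrix_(i, j) (i == j)%:R.
have pm : forall (M : 'M[R]_(2,2)), (forall i j, M i j = 0 \/ M i j = 1) -> payoff_matrix M.
  move=> M HM i j; case: (HM i j) => ->; split => //; exact: ler01.
have pA : payoff_matrix A.
  apply: pm => i j; rewrite mxE; case: (i == j); [right|left] => //.
pose o0 : 'I_2 := ord0. pose o1 : 'I_2 := @Ordinal 2 1 isT.
have [[x0 xs] _ _ _] := H 2 2 A A isT isT pA pA.
have [i [xi io]] : exists i, 0 < gr 2 2 A i /\ (i = o0 \/ i = o1).
  move: xs; rewrite sum2 => xs.
  case: (ltrP 0 (gr 2 2 A o0)) => h0; first by exists o0; split => //; left.
  exists o1; split; last by right.
  have := x0 o1; rewrite le0r => /orP [/eqP h1|//].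
  move: xs; rewrite h1 addr0 => h; move: h0; rewrite h; by rewrite ler10.
pose j := if i == o0 then o1 else o0.
pose B : 'M[R]_(2,2) := \matrix_(i', j') (j' != i)%:R.
have pB : payoff_matrix B.
  apply: pm => a b; rewrite mxE; case: (b != i); [right|left] => //.
have [[x0' xs'] [y0 ys] hr hc] := H 2 2 A B isT isT pA pB.
have colP : forall k, col_payoff B (gr 2 2 A) k = (k != i)%:R.
  move=> k; rewrite /col_payoff; under eq_bigr => a _ do rewrite mxE.
  by rewrite -big_distrl /= xs' mul1r.
have yi : gc 2 2 A B i = 0.
  apply/eqP; rewrite eq_le y0 andbT; rewrite leNgt; apply/negP => hy.
  have := hc i hy j; rewrite !colP eqxx /= .
  have -> : (j != i) = true by rewrite /j; case: io => ->.
  by rewrite subr_le0 => /(lt_le_trans he); rewrite ltxx.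
move: ys; rewrite sum2 => ys.
case: io xi yi => Hi xi yi; subst i.
- have := hr _ xi o1; rewrite /row_payoff !sum2 !mxE /=.
  rewrite yi add0r in ys; rewrite ?yi ys.
  rewrite !(mulr1, mulr0, mul0r, addr0, add0r) subr_le0 leNgt he //.
- have := hr _ xi o0; rewrite /row_payoff !sum2 !mxE /=.
  rewrite ?yi addr0 in ys; rewrite ?yi ys.
  rewrite !(mulr1, mulr0, mul0r, addr0, add0r) subr_le0 leNgt he //.
Qed.
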